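(* Let $K$ be a convex quadrilateral with bilinear map $F_K:(-1,1)^2\to K$ and $r\ge1$. Then for every $q\in P_{r-1}(K,\mathbb R)$ the tensor field $q\begin{pmatrix}0&1\\-1&0\end{pmatrix}$ belongs to $\Psi_r(K,\mathbb M)=\{(\hat\tau\circ F_K^{-1})DF_K^{-1}:$ each row of $\hat\tau$ lies in $P_{r-1,r}(\hat K)\times P_{r,r-1}(\hat K)\}$.
   Context: $\hat K=(-1,1)^2$, $F_K$ is bilinear (each component is in $Q_1(\hat K)$) and bijective onto the convex quadrilateral $K$; $DF_K$ is its Jacobian matrix (evaluated at $\hat x=F_K^{-1}(x)$). $P_{a,b}(\hat K)$ denotes polynomials of degree $\le a$ in $\hat x_1$ and $\le b$ in $\hat x_2$; $P_{r-1}(K,\mathbb R)$ denotes polynomials of total degree $\le r-1$ in the physical coordinates $x$. *)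

(* Defs.v *)
From HB Require Import structures.
From mathcomp Require Import all_boot all_order all_algebra.
Set Implicit Arguments. Unset Strict Implicit. Unset Printing Implicit Defensive.
Import Order.TTheory GRing.Theory Num.Theory.
Local Open Scope ring_scope.

Section Defs.
Variable R : realFieldType.

Definition pt := (R * R)%type.

Definition isPab (a b : nat) (f : R -> R -> R) : Prop :=
  exists c : nat -> nat -> R, forall x1 x2 : R,
    f x1 x2 = \sum_(i < a.+1) \sum_(j < b.+1) c i j * x1 ^+ i * x2 ^+ j.

Definition isPtot (n : nat) (f : R -> R -> R) : Prop :=
  exists c : nat -> nat -> R, forall x1 x2 : R,
    f x1 x2 = \sum_(i < n.+1) \sum_(j < n.+1 | (i + j <= n)%N) c i j * x1 ^+ i * x2 ^+ j.

Definition cross (a b : pt) : R := a.1 * b.2 - a.2 * b.1.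
Definition vsub (a b : pt) : pt := (a.1 - b.1, a.2 - b.2).
Definition turn (a b c : pt) : R := cross (vsub b a) (vsub c b).

Definition convex_quad (v1 v2 v3 v4 : pt) : Prop :=
  (0 < turn v1 v2 v3 /\ 0 < turn v2 v3 v4 /\ 0 < turn v3 v4 v1 /\ 0 < turn v4 v1 v2)
  \/ (turn v1 v2 v3 < 0 /\ turn v2 v3 v4 < 0 /\ turn v3 v4 v1 < 0 /\ turn v4 v1 v2 < 0).

(* The bilinear map F_K : K^ = (-1,1)^2 -> K sending the reference vertices
   (-1,-1),(1,-1),(1,1),(-1,1) to v1,v2,v3,v4; each component is in Q_1. *)
Definition bilin (v1 v2 v3 v4 : pt) (s t : R) : pt :=
  let N1 := (1 - s) * (1 - t) / 4 in
  let N2 := (1 + s) * (1 - t) / 4 in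
  let N3 := (1 + s) * (1 + t) / 4 in
  let N4 := (1 - s) * (1 + t) / 4 in
  (N1 * v1.1 + N2 * v2.1 + N3 * v3.1 + N4 * v4.1,
   N1 * v1.2 + N2 * v2.2 + N3 * v3.2 + N4 * v4.2).

(* Jacobian DF_K at (s,t): entry (i,j) = d F_i / d x^_j. *)
Definition dFds (v1 v2 v3 v4 : pt) (s t : R) : pt :=
  ((- (1 - t) * v1.1 + (1 - t) * v2.1 + (1 + t) * v3.1 - (1 + t) * v4.1) / 4,
   (- (1 - t) * v1.2 + (1 - t) * v2.2 + (1 + t) * v3.2 - (1 + t) * v4.2) / 4).
Definition dFdt (v1 v2 v3 v4 : pt) (s t : R) : pt :=
  ((- (1 - s) * v1.1 - (1 + s) * v2.1 + (1 + s) * v3.1 + (1 - s) * v4.1) / 4,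
   (- (1 - s) * v1.2 - (1 + s) * v2.2 + (1 + s) * v3.2 + (1 - s) * v4.2) / 4).

Definition mx2 (a b c d : R) : 'M[R]_2 :=
  \matrix_(i < 2, j < 2)
    if (i == 0 :> nat) then (if (j == 0 :> nat) then a else b)
    else (if (j == 0 :> nat) then c else d).

Definition DF (v1 v2 v3 v4 : pt) (s t : R) : 'M[R]_2 :=
  let a := dFds v1 v2 v3 v4 s t in
  let b := dFdt v1 v2 v3 v4 s t in
  mx2 a.1 b.1 a.2 b.2.

Definition Jskew : 'M[R]_2 := mx2 0 1 (-1) 0.

Definition i0 : 'I_2 := @Ordinal 2 0 isT.
Definition i1 : 'I_2 := @Ordinal 2 1 isT.

Definition rows_ok (r : nat) (tau : R -> R -> 'M[R]_2) : Prop :=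
  forall i : 'I_2,
    isPab r.-1 r (fun s t => tau s t i i0) /\ isPab r r.-1 (fun s t => tau s t i i1).

End Defs.

(* Main.v *)
Require Import Defs.
From HB Require Import structures.
From mathcomp Require Import all_boot all_order all_algebra.
From mathcomp Require Import ring lra.
Import Order.TTheory GRing.Theory Num.Theory.
Local Open Scope ring_scope.

Set Implicit Arguments. Unset Strict Implicit.
Section P.
Variable R : realFieldType.
Implicit Types f g : R -> R -> R.

Lemma isPab_ext {a b f g} : isPab a b f -> (forall x y, f x y = g x y) -> isPab a b g.
Proof. move=> [c Hc] e; exists c => x y; by rewrite -e Hc. Qed.

Lemma isPab_widen a b a' b' f : (a <= a')%N -> (b <= b')%N -> isPab a b f -> isPab a' b' f.
Proof.
move=> ha hb [c Hc]; exists (fun i j => if (i <= a)%N && (j <= b)%N then c i j else 0) => x y.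
rewrite Hc (@big_ord_widen _ _ _ a.+1 a'.+1 (fun i : nat => \sum_(j < b.+1) c i j * x ^+ i * y ^+ j) ha) big_mkcond /=.
apply: eq_bigr => i _; rewrite ltnS.
case: (leqP i a) => hi /=.
  rewrite (@big_ord_widen _ _ _ b.+1 b'.+1 (fun j : nat => c i j * x ^+ i * y ^+ j) hb) big_mkcond /=.
  by apply: eq_bigr => j _; rewrite ltnS; case: (leqP j b) => //= _; rewrite !mul0r.
by rewrite big1 // => j _; rewrite !mul0r.
Qed.

Lemma isPab_swap a b f : isPab a b f -> isPab b a (fun x y => f y x).
Proof.
move=> [c Hc]; exists (fun j i => c i j) => x y; rewrite Hc exchange_big /=.
by apply: eq_bigr => j _; apply: eq_bigr => i _; rewrite mulrAC.
Qed.

Lemma isPab_mulx a b f : isPab a b f -> isPab a.+1 b (fun x y => x * f x y).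
Proof.
move=> [c Hc]; exists (fun i j => if i is i'.+1 then c i' j else 0) => x y.
rewrite Hc [in RHS]big_ord_recl /= [X in _ = X + _]big1 ?add0r; last by move=> j _; rewrite !mul0r.
rewrite mulr_sumr; apply: eq_bigr => i _; rewrite mulr_sumr; apply: eq_bigr => j _ /=.
by rewrite /bump /= add1n exprS; ring.
Qed.

Lemma isPab_muly a b f : isPab a b f -> isPab a b.+1 (fun x y => y * f x y).
Proof. by move=> /isPab_swap /isPab_mulx /isPab_swap. Qed.

Lemma isPab_add a b f g : isPab a b f -> isPab a b g -> isPab a b (fun x y => f x y + g x y).
Proof.
move=> [c Hc] [e He]; exists (fun i j => c i j + e i j) => x y.
rewrite Hc He -big_split; apply: eq_bigr => i _; rewrite -big_split; apply: eq_bigr => j _.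
by rewrite /=; ring.
Qed.

Lemma isPab_scale a b k f : isPab a b f -> isPab a b (fun x y => k * f x y).
Proof.
move=> [c Hc]; exists (fun i j => k * c i j) => x y.
rewrite Hc mulr_sumr; apply: eq_bigr => i _; rewrite mulr_sumr; apply: eq_bigr => j _ /=.
by rewrite /=; ring.
Qed.

Lemma isPab0 a b : isPab a b (fun _ _ : R => (0 : R)).
Proof. by exists (fun _ _ => 0) => x y; rewrite big1 // => i _; rewrite big1 // => j _; rewrite !mul0r. Qed.

Lemma isPab_sum a b (I : Type) (s : seq I) (P : pred I) (F : I -> R -> R -> R) :
  (forall i, P i -> isPab a b (F i)) -> isPab a b (fun x y => \sum_(i <- s | P i) F i x y).
Proof.
move=> H; elim: s => [|i s IH].
  by eapply isPab_ext; [exact: (@isPab0 a b)|]; move=> x y /=; rewrite big_nil.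
case Pi: (P i).
  by eapply isPab_ext; [exact: (isPab_add (H i Pi) IH)|]; move=> x y /=; rewrite big_cons Pi.
by eapply isPab_ext; [exact: IH|]; move=> x y /=; rewrite big_cons Pi.
Qed.

Lemma isPab_mulxn a b k f : isPab a b f -> isPab (a + k) b (fun x y => x ^+ k * f x y).
Proof.
move=> H; elim: k => [|k IH]; first by rewrite addn0; eapply isPab_ext; [exact: H|]; move=> x y /=; rewrite expr0 mul1r.
by rewrite addnS; eapply isPab_ext; [exact: (isPab_mulx IH)|]; move=> x y /=; rewrite exprS mulrA.
Qed.

Lemma isPab_mulyn a b k f : isPab a b f -> isPab a (b + k) (fun x y => y ^+ k * f x y).
Proof.
move=> H; elim: k => [|k IH]; first by rewrite addn0; eapply isPab_ext; [exact: H|]; move=> x y /=; rewrite expr0 mul1r.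
by rewrite addnS; eapply isPab_ext; [exact: (isPab_muly IH)|]; move=> x y /=; rewrite exprS mulrA.
Qed.

Lemma isPab_mul a b c d f g : isPab a b f -> isPab c d g ->
  isPab (a + c) (b + d) (fun x y => f x y * g x y).
Proof.
move=> Hf [e He].
have : isPab (a + c) (b + d) (fun x y => \sum_(k < c.+1) \sum_(l < d.+1)
        e k l * (x ^+ k * (y ^+ l * f x y))).
  apply: isPab_sum => k _; apply: isPab_sum => l _; apply: isPab_scale.
  apply: (@isPab_widen (a + k) (b + l)); [by rewrite leq_add2l -ltnS | by rewrite leq_add2l -ltnS |].
  by apply: isPab_mulxn; apply: isPab_mulyn.
move=> HH; eapply isPab_ext; [exact: HH|]; move=> x y; rewrite He mulr_sumr; apply: eq_bigr => k _.
rewrite mulr_sumr; apply: eq_bigr => l _; ring.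
Qed.

Lemma isPab_exp a b n f : isPab a b f -> isPab (a * n) (b * n) (fun x y => f x y ^+ n).
Proof.
move=> H; elim: n => [|n IH].
  rewrite !muln0; exists (fun _ _ => 1) => x y.
  by rewrite !big_ord1 /= !expr0 !mulr1.
rewrite !mulnS; eapply isPab_ext; [exact: (isPab_mul H IH)|]; move=> x y /=; by rewrite exprS.
Qed.

Lemma isPab_bil (a b c d : R) : isPab 1 1 (fun s t => a + b * s + c * t + d * (s * t)).
Proof.
exists (fun i j : nat => (match i, j with 0%N, 0%N => a | 1%N, 0%N => b | 0%N, _ => c | _, _ => d end : R)) => x y.
rewrite !big_ord_recl !big_ord0 /= /bump /=; rewrite !expr0 !expr1; ring.
Qed.

Lemma isPtot_comp n q f g : isPtot n q -> isPab 1 1 f -> isPab 1 1 g ->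
  isPab n n (fun s t => q (f s t) (g s t)).
Proof.
move=> [c Hc] Hf Hg.
have : isPab n n (fun s t => \sum_(i < n.+1) \sum_(j < n.+1 | (i + j <= n)%N)
                       c i j * (f s t) ^+ i * (g s t) ^+ j).
  apply: isPab_sum => i _; apply: isPab_sum => j hij.
  have := isPab_mul (isPab_exp i Hf) (isPab_exp j Hg); rewrite !mul1n => H.
  apply: (isPab_widen hij hij).
  by eapply isPab_ext; [exact: (isPab_scale (c i j) H)|]; move=> x y /=; rewrite mulrA.
move=> HH; eapply isPab_ext; [exact: HH|]; move=> x y; by rewrite Hc.
Qed.
End P.

Section M.
Variable R : realFieldType.

Lemma mx2E (a b c d : R) i j : mx2 a b c d i j =
  if (i == 0 :> nat) then (if (j == 0 :> nat) then a else b)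
  else (if (j == 0 :> nat) then c else d).
Proof. by rewrite mxE. Qed.

Lemma mx2_mul (a b c d e f g h : R) : mx2 a b c d *m mx2 e f g h =
  mx2 (a*e+b*g) (a*f+b*h) (c*e+d*g) (c*f+d*h).
Proof.
apply/matrixP => i j; rewrite !mxE !big_ord_recl big_ord0 !mx2E /= addr0.
by move: i j => [[|[|i]] Hi] [[|[|j]] Hj] //=.
Qed.

Lemma mx2_1 : (1%:M : 'M[R]_2) = mx2 1 0 0 1.
Proof.
apply/matrixP => i j; rewrite !mxE.
by move: i j => [[|[|i]] Hi] [[|[|j]] Hj] //=.
Qed.

Lemma mx2_scale (k a b c d : R) : k *: mx2 a b c d = mx2 (k*a) (k*b) (k*c) (k*d).
Proof.
apply/matrixP => i j; rewrite !mxE.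
by move: i j => [[|[|i]] Hi] [[|[|j]] Hj] //=.
Qed.

Lemma mx2_unit (a b c d : R) : a * d - b * c != 0 -> mx2 a b c d \in unitmx.
Proof.
move=> h.
have /mulmx1_unit [] // : mx2 a b c d *m mx2 (d / (a*d-b*c)) (- b / (a*d-b*c))
   (- c / (a*d-b*c)) (a / (a*d-b*c)) = 1%:M.
rewrite mx2_mul mx2_1; congr mx2; field; done.
Qed.
End M.

Lemma isPab_lin_t (R : realFieldType) (a c : R) : isPab 0 1 (fun s t : R => a + c * t).
Proof.
exists (fun i j : nat => (if j is 0%N then a else c)) => x y.
rewrite !big_ord_recl !big_ord0 /= /bump /= !expr0 !expr1; ring.
Qed.

Lemma isPab_lin_s (R : realFieldType) (a c : R) : isPab 1 0 (fun s t : R => a + c * s).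
Proof.
exists (fun i j : nat => (if i is 0%N then a else c)) => x y.
rewrite !big_ord_recl !big_ord0 /= /bump /= !expr0 !expr1; ring.
Qed.

Lemma mul_pn_lt0 (R : realFieldType) (x y : R) : 0 < x -> y < 0 -> x * y < 0.
Proof. by move=> hx hy; rewrite pmulr_rlt0. Qed.

Definition detDF {R : realFieldType} (v1 v2 v3 v4 : pt R) (s t : R) :=
  (dFds (R:=R) v1 v2 v3 v4 s t).1 * (dFdt (R:=R) v1 v2 v3 v4 s t).2
  - (dFdt (R:=R) v1 v2 v3 v4 s t).1 * (dFds (R:=R) v1 v2 v3 v4 s t).2.

Lemma det_id (R : realFieldType) (v1 v2 v3 v4 : pt R) (s t : R) :
  16 * detDF v1 v2 v3 v4 s t =
  (1-s)*(1-t) * turn v4 v1 v2 + (1+s)*(1-t) * turn v1 v2 v3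
  + (1+s)*(1+t) * turn v2 v3 v4 + (1-s)*(1+t) * turn v3 v4 v1.
Proof. rewrite /detDF /= /turn /cross /vsub /=; by field. Qed.

Lemma det_nz (R : realFieldType) (v1 v2 v3 v4 : pt R) (s t : R) :
  convex_quad v1 v2 v3 v4 -> -1 < s < 1 -> -1 < t < 1 ->
  detDF v1 v2 v3 v4 s t != 0.
Proof.
move=> hc /andP[hs1 hs2] /andP[ht1 ht2].
have e := @det_id R v1 v2 v3 v4 s t.
have p1 : 0 < (1-s)*(1-t) by apply: mulr_gt0; lra.
have p2 : 0 < (1+s)*(1-t) by apply: mulr_gt0; lra.
have p3 : 0 < (1+s)*(1+t) by apply: mulr_gt0; lra.
have p4 : 0 < (1-s)*(1+t) by apply: mulr_gt0; lra.
case: hc => [[h1 [h2 [h3 h4]]] | [h1 [h2 [h3 h4]]]].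
- have q1 := mulr_gt0 p1 h4; have q2 := mulr_gt0 p2 h1.
  have q3 := mulr_gt0 p3 h2; have q4 := mulr_gt0 p4 h3.
  apply/eqP => h; rewrite h in e; lra.
- have q1 := (@mul_pn_lt0 R _ _ p1 h4); have q2 := (@mul_pn_lt0 R _ _ p2 h1).
  have q3 := (@mul_pn_lt0 R _ _ p3 h2); have q4 := (@mul_pn_lt0 R _ _ p4 h3).
  apply/eqP => h; rewrite h in e; lra.
Qed.

Theorem mainTheorem11 (R : realFieldType) (v1 v2 v3 v4 : pt R) (r : nat)
  (q : R -> R -> R) :
  convex_quad v1 v2 v3 v4 -> (1 <= r)%N -> isPtot r.-1 q ->
  exists tau : R -> R -> 'M[R]_2,
    rows_ok r tau /\
    forall s t : R, -1 < s < 1 -> -1 < t < 1 ->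
      let x := bilin v1 v2 v3 v4 s t in
      q x.1 x.2 *: Jskew R = tau s t *m invmx (DF v1 v2 v3 v4 s t).
Proof.
move=> hc hr.
case: r hr => [//|n] _ /= hq.
have HF1 : isPab 1 1 (fun s t => (bilin v1 v2 v3 v4 s t).1).
  eapply isPab_ext; [exact: (isPab_bil ((v1.1 + v2.1 + v3.1 + v4.1)/4)
     ((- v1.1 + v2.1 + v3.1 - v4.1)/4) ((- v1.1 - v2.1 + v3.1 + v4.1)/4)
     ((v1.1 - v2.1 + v3.1 - v4.1)/4))|].
  by move=> x y; rewrite /bilin /=; field.
have HF2 : isPab 1 1 (fun s t => (bilin v1 v2 v3 v4 s t).2).
  eapply isPab_ext; [exact: (isPab_bil ((v1.2 + v2.2 + v3.2 + v4.2)/4)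
     ((- v1.2 + v2.2 + v3.2 - v4.2)/4) ((- v1.2 - v2.2 + v3.2 + v4.2)/4)
     ((v1.2 - v2.2 + v3.2 - v4.2)/4))|].
  by move=> x y; rewrite /bilin /=; field.
have hQ := isPtot_comp hq HF1 HF2.
have Hds : forall p : pt R -> R, isPab 0 1 (fun s t =>
   (- (1 - t) * p v1 + (1 - t) * p v2 + (1 + t) * p v3 - (1 + t) * p v4) / 4).
  move=> p; eapply isPab_ext; [exact: (@isPab_lin_t R ((- p v1 + p v2 + p v3 - p v4)/4)
     ((p v1 - p v2 + p v3 - p v4)/4))|].
  by move=> x y; field.
have Hdt : forall p : pt R -> R, isPab 1 0 (fun s t =>
   (- (1 - s) * p v1 - (1 + s) * p v2 + (1 + s) * p v3 + (1 - s) * p v4) / 4).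
  move=> p; eapply isPab_ext; [exact: (@isPab_lin_s R ((- p v1 - p v2 + p v3 + p v4)/4)
     ((p v1 - p v2 + p v3 - p v4)/4))|].
  by move=> x y; field.
pose Q s t := q (bilin v1 v2 v3 v4 s t).1 (bilin v1 v2 v3 v4 s t).2.
exists (fun s t => mx2 (Q s t * (dFds v1 v2 v3 v4 s t).2) (Q s t * (dFdt v1 v2 v3 v4 s t).2)
   (- (Q s t * (dFds v1 v2 v3 v4 s t).1)) (- (Q s t * (dFdt v1 v2 v3 v4 s t).1))).
split.
  have A p : isPab n n.+1 (fun s t => Q s t * ((- (1 - t) * p v1 + (1 - t) * p v2 + (1 + t) * p v3 - (1 + t) * p v4) / 4)).
    by have := isPab_mul hQ (Hds p); rewrite addn0 addn1.
  have B p : isPab n.+1 n (fun s t => Q s t * ((- (1 - s) * p v1 - (1 + s) * p v2 + (1 + s) * p v3 + (1 - s) * p v4) / 4)).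
    by have := isPab_mul hQ (Hdt p); rewrite addn0 addn1.
  move=> [[|[|i]] Hi] //; split.
  - by eapply isPab_ext; [exact: (A snd)|]; move=> x y; rewrite mx2E.
  - by eapply isPab_ext; [exact: (B snd)|]; move=> x y; rewrite mx2E.
  - by eapply isPab_ext; [exact: (isPab_scale (-1) (A fst))|]; move=> x y; rewrite mx2E /=; ring.
  - by eapply isPab_ext; [exact: (isPab_scale (-1) (B fst))|]; move=> x y; rewrite mx2E /=; ring.
move=> s t hs ht /=.
have E : mx2 (Q s t * (dFds v1 v2 v3 v4 s t).2) (Q s t * (dFdt v1 v2 v3 v4 s t).2)
   (- (Q s t * (dFds v1 v2 v3 v4 s t).1)) (- (Q s t * (dFdt v1 v2 v3 v4 s t).1))
   = Q s t *: (Jskew R *m DF v1 v2 v3 v4 s t).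
  by rewrite /Jskew /DF mx2_mul mx2_scale; congr mx2; ring.
rewrite E -scalemxAl -mulmxA mulmxV ?mulmx1 //.
rewrite /DF; apply: mx2_unit; exact: det_nz.
Qed.
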